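(* Let $G$ be a graph, let $\epsilon,\epsilon'$ be positive constants with $\epsilon+\epsilon'<1/2$, let $K$ be an $\epsilon$-almost-clique-like set of nodes, and let $k$ be an integer. Consider a $k$-bucketing of $K$ chosen uniformly at random (each $v\in K$ independently picks $t(v)\in[k]$ uniformly). Then for each $i\in[k]$, the probability that the $i$-th bucket fails to be $\epsilon'$-almost-clique-preserved is at most $2|K|\exp(-\epsilon'^2|K|/(6k))$.
   Context: $N(v)$ is the set of neighbors of $v$ in $G$. A set $K$ is $\epsilon$-almost-clique-like if $|N(v)\cap K|\ge(1-\epsilon)|K|$ for all $v\in K$. A $k$-bucketing of $K$ assigns $t(v)\in[k]$ to each $v\in K$, with buckets $T_j=\{v\in K:t(v)=j\}$. The $i$-th bucket $T_i$ is $\epsilon'$-almost-clique-preserved if for every $v\in K$, $(1-\epsilon')|N(v)\cap K|/k\le|N(v)\cap T_i|\le(1+\epsilon')|N(v)\cap K|/k$. *)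

(* Defs.v *)
From HB Require Import structures.
From mathcomp Require Import all_boot all_order all_algebra.
From mathcomp Require Import reals sequences exp.
Set Implicit Arguments. Unset Strict Implicit. Unset Printing Implicit Defensive.
Import Order.TTheory GRing.Theory Num.Theory.
Local Open Scope ring_scope.

Section Defs.
Variables (R : realType) (V : finType) (e : rel V).

Definition nbhd (v : V) : {set V} := [set u | e v u].

Definition almost_clique_like (eps : R) (K : {set V}) : Prop :=
  forall v, v \in K -> (1 - eps) * #|K|%:R <= #|nbhd v :&: K|%:R.

Definition bucket (k : nat) (K : {set V}) (t : V -> 'I_k) (i : 'I_k) : {set V} :=
  [set v in K | t v == i].

Definition clique_preserved (eps' : R) (k : nat) (K : {set V})
    (t : V -> 'I_k) (i : 'I_k) : bool :=
  [forall v in K,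
    ((1 - eps') * #|nbhd v :&: K|%:R / k%:R <= #|nbhd v :&: bucket K t i|%:R) &&
    (#|nbhd v :&: bucket K t i|%:R <= (1 + eps') * #|nbhd v :&: K|%:R / k%:R)].

End Defs.

(* Main.v *)
Require Import Defs.
From HB Require Import structures.
From mathcomp Require Import all_boot all_order all_algebra.
From mathcomp Require Import reals sequences exp.
From mathcomp Require Import ring lra.
Import Order.TTheory GRing.Theory Num.Theory.
Local Open Scope ring_scope.

Lemma sum_pow (R : realType) (V : finType) (k : nat) (i : 'I_k) (D : {set V}) (a : R) :
  \sum_(t : {ffun V -> 'I_k}) a ^+ #|[set u in D | t u == i]|
  = (a + (k.-1)%:R) ^+ #|D| * k%:R ^+ (#|V| - #|D|).
Proof.
have E (t : {ffun V -> 'I_k}) : a ^+ #|[set u in D | t u == i]| =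
   \prod_(u : V) (if (u \in D) && (t u == i) then a else 1).
  by rewrite -big_mkcond /= -prodr_const; apply: eq_bigl => u; rewrite inE.
rewrite (eq_bigr _ (fun t _ => E t)).
rewrite -(bigA_distr_bigA (fun u j => if (u \in D) && (j == i) then a else 1)) /=.
have S u : \sum_(j : 'I_k) (if (u \in D) && (j == i) then a else 1) =
   if u \in D then a + (k.-1)%:R else k%:R.
  case: (u \in D) => /=; last by rewrite sumr_const card_ord.
  rewrite (bigD1 i) //= eqxx; congr (_ + _).
  rewrite (eq_bigr (fun _ => 1)); last by move=> j /negbTE ->.
  rewrite sumr_const.
  have -> : #|[pred j : 'I_k | j != i]| = k.-1.
    by rewrite cardC1 card_ord.
  by [].
rewrite (eq_bigr _ (fun u _ => S u)).
rewrite (bigID (fun u => u \in D)) /=.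
rewrite (eq_bigr (fun _ => a + (k.-1)%:R)); last by move=> u ->.
rewrite [X in _ * X](eq_bigr (fun _ => k%:R)); last by move=> u /negbTE ->.
rewrite !prodr_const; congr (_ ^+ _ * _ ^+ _). by rewrite -(cardC D) addKn; apply: eq_card => u; rewrite !inE.
Qed.
Lemma mgf_bound (R : realType) (k d N : nat) (a : R) : (0 < k)%N -> 0 <= a -> (d <= N)%N ->
  (a + (k.-1)%:R) ^+ d * k%:R ^+ (N - d) <= k%:R ^+ N * expR (d%:R * ((a - 1) / k%:R)).
Proof.
move=> k0 a0 dN.
have kR : 0 < k%:R :> R by rewrite ltr0n.
have E : a + (k.-1)%:R = k%:R * (1 + (a - 1) / k%:R).
  rewrite mulrDr mulr1 mulrC divfK ?gt_eqF //.
  by rewrite -(prednK k0) /= -addn1 natrD; ring.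
have y0 : 0 <= 1 + (a - 1) / k%:R.
  rewrite -(@pmulr_rge0 _ k%:R) // -E.
  by rewrite addr_ge0.
rewrite E exprMn expRM_natl -mulrA mulrC -mulrA -exprD subnK //.
rewrite mulrC ler_pM2l ?exprn_gt0 //.
by rewrite lerXn2r ?nnegrE ?expR_ge0 // expR_ge1Dx.
Qed.

Lemma expR4 (R : realType) (z w : R) : 0 <= w -> expR z * w <= 1 ->
  expR (4 * z) * w ^+ 4 <= 1.
Proof.
move=> w0 h.
rewrite (expRM_natl 4) -exprMn exprn_ile1 //.
by rewrite mulr_ge0 // expR_ge0.
Qed.

Lemma expup (R : realType) (l : R) : 0 <= l <= 1 -> expR l * (1 - l / 4) ^+ 4 <= 1.
Proof.
case/andP=> l0 l1.
have E : 4 * (l / 4) = l by field.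
have := @expR4 R (l / 4) (1 - l / 4); rewrite E; apply; first lra.
have := expRxMexpNx_1 (l/4); have := expR_ge1Dx (- (l / 4)).
have := expR_gt0 (l/4); nra.
Qed.

Lemma explo (R : realType) (l : R) : 0 <= l <= 1 -> expR (- l) * (1 + l / 4) ^+ 4 <= 1.
Proof.
case/andP=> l0 l1.
have E : 4 * (- (l / 4)) = - l by field.
have := @expR4 R (- (l / 4)) (1 + l / 4); rewrite E; apply; first lra.
have := expRxMexpNx_1 (l/4); have := expR_ge1Dx (l / 4).
have := expR_gt0 (- (l/4)); nra.
Qed.
Lemma polyup (R : realFieldType) (d : R) : 0 < d -> d < 1/2 ->
  (3 + 6*d) <= (1 - (3*d/4)/4)^+4 * ((3+6*d)*(1 + (3*d/4)*(1+d)) - d^+2).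
Proof. move=> h1 h2. nra. Qed.
Lemma polylo (R : realFieldType) (d : R) : 0 < d -> d < 1/2 ->
  (3 + 6*d) <= (1 + (3*d/4)/4)^+4 * ((3+6*d)*(1 - (3*d/4)*(1-d)) - d^+2).
Proof. move=> h1 h2. nra. Qed.


Lemma key_up (R : realFieldType) (d a : R) : 0 < d -> d < 1/2 -> 0 < a ->
  a * (1 - (3*d/4)/4)^+4 <= 1 -> (3 + 6*d) * (a - 1 - (3*d/4)*(1+d)) <= - d^+2.
Proof.
move=> d0 d1 a0.
move=> h; move: h; have := @polyup R d d0 d1.
set p := (1 - _)^+4. set Q := (_ - _).
have EQ : Q = (3+6*d)*(1 + (3*d/4)*(1 + d)) - d^+2 by [].
have p0 : 0 < p by rewrite /p exprn_gt0 //; lra.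
move=> hp h. clearbody p Q.
have Q0 : 0 <= Q.
  rewrite leNgt; apply/negP => Qn.
  have : p * Q < 0 by rewrite pmulr_rlt0.
  lra.
have h1 : a * (3 + 6 * d) <= a * (p * Q) by rewrite ler_pM2l.
have h2 : a * (p * Q) <= Q.
  have : 0 <= (1 - a * p) * Q by apply: mulr_ge0 => //; rewrite subr_ge0.
  rewrite mulrBl mul1r mulrA; lra.
rewrite EQ in h1 h2; nra.
Qed.

Lemma key_lo (R : realFieldType) (d a : R) : 0 < d -> d < 1/2 -> 0 < a ->
  a * (1 + (3*d/4)/4)^+4 <= 1 -> (3 + 6*d) * (a - 1 + (3*d/4)*(1-d)) <= - d^+2.
Proof.
move=> d0 d1 a0.
move=> h; move: h; have := @polylo R d d0 d1.
set p := (1 + _)^+4. set Q := (_ - _).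
have EQ : Q = (3+6*d)*(1 - (3*d/4)*(1 - d)) - d^+2 by [].
have p0 : 0 < p by rewrite /p exprn_gt0 //; lra.
move=> hp h. clearbody p Q.
have Q0 : 0 <= Q.
  rewrite leNgt; apply/negP => Qn.
  have : p * Q < 0 by rewrite pmulr_rlt0.
  lra.
have h1 : a * (3 + 6 * d) <= a * (p * Q) by rewrite ler_pM2l.
have h2 : a * (p * Q) <= Q.
  have : 0 <= (1 - a * p) * Q by apply: mulr_ge0 => //; rewrite subr_ge0.
  rewrite mulrBl mul1r mulrA; lra.
rewrite EQ in h1 h2; nra.
Qed.
Lemma expo (R : realFieldType) (del eps d n k c : R) : 0 < del -> 0 < k -> 0 <= d -> 0 <= n ->
  eps + del < 1/2 -> (1 - eps) * n <= d -> (3 + 6 * del) * c <= - del ^+ 2 ->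
  d * c / k <= - (del ^+ 2 * n / (6 * k)).
Proof.
move=> d0 k0 dd0 n0 hs hd hc.
have h6 : (3 + 6 * del) * n <= 6 * d by nra.
have h1 : (3 + 6 * del) * (d * c) <= (3 + 6 * del) * (- (del ^+ 2 * n / 6)) by nra.
rewrite ler_pM2l in h1; last lra.
have -> : - (del ^+ 2 * n / (6 * k)) = - (del ^+ 2 * n / 6) / k by field; lra.
by rewrite ler_pM2r ?invr_gt0.
Qed.

Theorem lemma4p7 (R : realType) (V : finType) (e : rel V)
  (e_sym : symmetric e) (e_irr : irreflexive e)
  (eps eps' : R) (heps : 0 < eps) (heps' : 0 < eps')
  (hsum : eps + eps' < 1 / 2)
  (K : {set V}) (hK : almost_clique_like e eps K)
  (k : nat) (i : 'I_k) :
  #|[set t : {ffun V -> 'I_k} |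
       ~~ clique_preserved e eps' K t i ]|%:R / (k ^ #|V|)%:R
  <= 2 * #|K|%:R * expR (- (eps' ^+ 2 * #|K|%:R / (6 * k%:R))).
Proof.
have k0 : (0 < k)%N := leq_ltn_trans (leq0n i) (ltn_ord i).
have kR : 0 < k%:R :> R by rewrite ltr0n.
set n := #|K|.
set N := #|V|.
pose lam := 3 * eps' / 4.
have lam0 : 0 <= lam <= 1 by apply/andP; split; rewrite /lam; lra.
pose D v := nbhd e v :&: K.
pose X v (t : {ffun V -> 'I_k}) := #|[set u in D v | t u == i]|.
pose mu v := #|D v|%:R / k%:R : R.
pose f v t := expR lam ^+ X v t * expR (- (lam * (1 + eps') * mu v))
            + expR (- lam) ^+ X v t * expR (lam * (1 - eps') * mu v).
pose E := expR (- (eps' ^+ 2 * n%:R / (6 * k%:R))).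
have f0 v t : 0 <= f v t by rewrite addr_ge0 // mulr_ge0 // ?exprn_ge0 ?expR_ge0.
have XE v (t : {ffun V -> 'I_k}) : #|nbhd e v :&: bucket K t i| = X v t.
  by apply: eq_card => u; rewrite /X /D /bucket !inE andbA.
have A (t : {ffun V -> 'I_k}) : ~~ clique_preserved e eps' K t i -> 1 <= \sum_(v in K) f v t.
  rewrite /clique_preserved => /forall_inPn [v vK].
  rewrite !XE negb_and -!ltNge => H.
  rewrite (bigD1 v) //= -[1]addr0 lerD ?sumr_ge0 //.
  have ge1 x : 0 <= x -> 1 <= expR x by move=> x0; have := expR_ge1Dx x; lra.
  rewrite /f -!expRM_natl -!expRD.
  case/orP: H => H.
  - have : 1 <= expR ((X v t)%:R * - lam + lam * (1 - eps') * mu v).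
      apply: ge1; rewrite /mu /D; move: H; rewrite /lam; nra.
    have := expR_ge0 ((X v t)%:R * lam + - (lam * (1 + eps') * mu v)); lra.
  - have : 1 <= expR ((X v t)%:R * lam + - (lam * (1 + eps') * mu v)).
      apply: ge1; rewrite /mu /D; move: H; rewrite /lam; nra.
    have := expR_ge0 ((X v t)%:R * - lam + lam * (1 - eps') * mu v); lra.
have B v : v \in K -> \sum_t f v t <= 2 * (k%:R ^+ N * E).
  move=> vK.
  have dN : (#|D v| <= N)%N := max_card _.
  have hd : (1 - eps) * n%:R <= #|D v|%:R := hK v vK.
  rewrite big_split /= -!mulr_suml /X !sum_pow mulr2n mulrDl mul1r.
  have d0 : 0 <= #|D v|%:R :> R by [].
  have n0 : 0 <= n%:R :> R by [].
  have hlt : eps' < 1/2 by lra.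
  apply: lerD.
  - apply: le_trans (ler_wpM2r (expR_ge0 _) (@mgf_bound R k _ _ (expR lam) k0 (expR_ge0 lam) dN)) _.
    rewrite -(mulrA (k%:R ^+ N)) -expRD ler_pM2l ?exprn_gt0 // ler_expR.
    have := @key_up R eps' (expR lam) heps' hlt (expR_gt0 lam) (@expup R lam lam0).
    move=> hc.
    have -> : #|D v|%:R * ((expR lam - 1) / k%:R) + - (lam * (1 + eps') * mu v)
       = #|D v|%:R * (expR lam - 1 - 3 * eps' / 4 * (1 + eps')) / k%:R.
      by rewrite /mu /lam; field; rewrite gt_eqF.
    exact: expo hsum hd hc.
  - apply: le_trans (ler_wpM2r (expR_ge0 _) (@mgf_bound R k _ _ (expR (- lam)) k0 (expR_ge0 _) dN)) _.
    rewrite -(mulrA (k%:R ^+ N)) -expRD ler_pM2l ?exprn_gt0 // ler_expR.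
    have := @key_lo R eps' (expR (- lam)) heps' hlt (expR_gt0 _) (@explo R lam lam0).
    move=> hc.
    have -> : #|D v|%:R * ((expR (- lam) - 1) / k%:R) + lam * (1 - eps') * mu v
       = #|D v|%:R * (expR (- lam) - 1 + 3 * eps' / 4 * (1 - eps')) / k%:R.
      by rewrite /mu /lam; field; rewrite gt_eqF.
    exact: expo hsum hd hc.
rewrite natrX ler_pdivrMr ?exprn_gt0 //.
set bad := [set t | _].
have -> : #|bad|%:R = \sum_(t in bad) (1 : R) by rewrite sumr_const.
apply: (@le_trans _ _ (\sum_(t in bad) \sum_(v in K) f v t)).
  by apply: ler_sum => t; rewrite inE; exact: A.
apply: (@le_trans _ _ (\sum_t \sum_(v in K) f v t)).
  rewrite [X in _ <= X](bigID (fun t => t \in bad)) /= lerDl.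
  by apply: sumr_ge0 => t _; apply: sumr_ge0 => v _; exact: f0.
rewrite exchange_big /=.
apply: le_trans (ler_sum _ B) _.
rewrite sumr_const -mulr_natr le_eqVlt; apply/orP; left; apply/eqP.
rewrite /E /n; ring.
Qed.
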